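(* Let $F:\mathbb R^d\to\mathbb R$ be continuously differentiable with $\|\nabla F(x)-\nabla F(y)\|\le(K_0+K_1\|\nabla F(x)\|)\|x-y\|$ for all $x,y$. Let $\gamma>0$, let $\{m_t\}$ be an arbitrary sequence of nonzero vectors, and let $w_{t+1}=w_t-\gamma\, m_{t+1}/\|m_{t+1}\|$ starting from $w_0$. Define $\delta_t=m_{t+1}-\nabla F(w_t)$. Then for every $t$, $$F(w_{t+1})-F(w_t)\le-\Big(\gamma-\tfrac12K_1\gamma^2\Big)\|\nabla F(w_t)\|+\tfrac12K_0\gamma^2+2\gamma\|\delta_t\|,$$ and consequently, for every $T\ge1$, $$\Big(1-\tfrac12K_1\gamma\Big)\sum_{t=0}^{T-1}\|\nabla F(w_t)\|\le\frac{F(w_0)-F(w_T)}{\gamma}+\tfrac12K_0T\gamma+2\sum_{t=0}^{T-1}\|\delta_t\|.$$ *)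

(* Defs.v *)
(* Vectors of R^d are row vectors 'rV[R]_d. *)
From HB Require Import structures.
From mathcomp Require Import all_boot all_order all_algebra.
From mathcomp Require Import all_classical all_reals all_analysis.
Set Implicit Arguments. Unset Strict Implicit. Unset Printing Implicit Defensive.
Import Order.TTheory GRing.Theory Num.Theory.
Import numFieldNormedType.Exports.
Local Open Scope ring_scope.

Definition dotv (R : realType) (d : nat) (u v : 'rV[R]_d) : R :=
  \sum_(i < d) u ord0 i * v ord0 i.

Definition enorm (R : realType) (d : nat) (u : 'rV[R]_d) : R :=
  Num.sqrt (dotv u u).

Definition is_gradient (R : realType) (d : nat)
  (F : 'rV[R]_d -> R) (G : 'rV[R]_d -> 'rV[R]_d) : Prop :=
  forall x, differentiable F x /\ forall h, ('d F x : 'rV[R]_d -> R) h = dotv (G x) h.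

(* Main.v *)
Require Import Defs.
From HB Require Import structures.
From mathcomp Require Import all_boot all_order all_algebra.
From mathcomp Require Import all_classical all_reals all_analysis.
From mathcomp Require Import ring lra.
Set Implicit Arguments. Unset Strict Implicit. Unset Printing Implicit Defensive.
Import Order.TTheory GRing.Theory Num.Theory.
Import numFieldNormedType.Exports.
Local Open Scope ring_scope.
Section H.
Variables (R : realType) (d : nat).
Implicit Types u v w : 'rV[R]_d.
Lemma dotvC u v : dotv u v = dotv v u.
Proof. by rewrite /dotv; apply: eq_bigr => i _; rewrite mulrC. Qed.
Lemma dotvDl u v w : dotv (u + v) w = dotv u w + dotv v w.
Proof. by rewrite /dotv -big_split /=; apply: eq_bigr => i _; rewrite mxE mulrDl. Qed.
Lemma dotvZl a u w : dotv (a *: u) w = a * dotv u w.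
Proof. by rewrite /dotv mulr_sumr; apply: eq_bigr => i _; rewrite mxE mulrA. Qed.
Lemma dotvNl u w : dotv (- u) w = - dotv u w.
Proof. by rewrite -scaleN1r dotvZl mulN1r. Qed.
Lemma dotvBl u v w : dotv (u - v) w = dotv u w - dotv v w.
Proof. by rewrite dotvDl dotvNl. Qed.
Lemma dotvBr u v w : dotv w (u - v) = dotv w u - dotv w v.
Proof. by rewrite dotvC dotvBl !(dotvC w). Qed.
Lemma dotvZr a u w : dotv w (a *: u) = a * dotv w u.
Proof. by rewrite dotvC dotvZl dotvC. Qed.
Lemma dotv0l w : dotv 0 w = 0.
Proof. by rewrite /dotv big1 // => i _; rewrite mxE mul0r. Qed.
Lemma dotv_ge0 u : 0 <= dotv u u.
Proof. by apply: sumr_ge0 => i _; rewrite -expr2 sqr_ge0. Qed.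
Lemma enorm_ge0 u : 0 <= enorm u.
Proof. exact: sqrtr_ge0. Qed.
Lemma enorm_sq u : enorm u ^+ 2 = dotv u u.
Proof. by rewrite sqr_sqrtr // dotv_ge0. Qed.
Lemma enorm_eq0 u : enorm u = 0 -> u = 0.
Proof.
move=> /eqP; rewrite sqrtr_eq0 => h.
have h0 : dotv u u = 0 by apply/eqP; rewrite eq_le h dotv_ge0.
have H : forall i, u ord0 i * u ord0 i = 0.
  move=> i; apply: (@psumr_eq0P _ _ xpredT (fun i => u ord0 i * u ord0 i)) => //.
  by move=> k _; rewrite -expr2 sqr_ge0.
apply/matrixP => i j; rewrite (ord1 i) mxE.
by have /eqP := H j; rewrite mulf_eq0 orbb => /eqP.
Qed.
Lemma enormZ a u : enorm (a *: u) = `|a| * enorm u.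
Proof. by rewrite /enorm dotvZl dotvZr mulrA -expr2 sqrtrM ?sqr_ge0 // sqrtr_sqr. Qed.
Lemma enormN u : enorm (- u) = enorm u.
Proof. by rewrite -scaleN1r enormZ normrN1 mul1r. Qed.
Lemma cauchy_schwarz u v : dotv u v <= enorm u * enorm v.
Proof.
case: (eqVneq (enorm u) 0) => [/enorm_eq0 ->|ha].
  by rewrite dotv0l mulr_ge0 // enorm_ge0.
case: (eqVneq (enorm v) 0) => [/enorm_eq0 ->|hb].
  by rewrite dotvC dotv0l mulr_ge0 // enorm_ge0.
have a0 : 0 < enorm u by rewrite lt_def ha enorm_ge0.
have b0 : 0 < enorm v by rewrite lt_def hb enorm_ge0.
have := dotv_ge0 (enorm v *: u - enorm u *: v).
rewrite !dotvBl !dotvBr !dotvZl !dotvZr -!enorm_sq (dotvC v u).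
set a := enorm u; set b := enorm v; set c := dotv u v => H.
have : 0 <= (a * b) * (a * b - c) by nra.
rewrite pmulr_rge0 ?mulr_gt0 //; lra.
Qed.
Lemma enorm_triangle u v : enorm (u + v) <= enorm u + enorm v.
Proof.
rewrite -[enorm u + enorm v]ger0_norm ?addr_ge0 ?enorm_ge0 // -sqrtr_sqr.
rewrite /enorm ler_sqrt ?sqr_ge0 //.
have := cauchy_schwarz u v.
rewrite dotvDl !(dotvC _ (u + v)) !dotvDl (dotvC v u) -/(enorm u) -/(enorm v).
rewrite -!enorm_sq. lra.
Qed.

Lemma descent (F : 'rV[R]_d -> R) (G : 'rV[R]_d -> 'rV[R]_d) (K0 K1 : R)
  (hgrad : is_gradient F G)
  (hsmooth : forall x y : 'rV[R]_d,
     enorm (G x - G y) <= (K0 + K1 * enorm (G x)) * enorm (x - y))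
  x h :
  F (x + h) <= F x + dotv (G x) h + 2^-1 * (K0 + K1 * enorm (G x)) * enorm h ^+ 2.
Proof.
set L := K0 + K1 * enorm (G x).
set a := dotv (G x) h.
set k := 2^-1 * (L * enorm h ^+ 2).
pose g : R -> 'rV[R]_d := cst x + ( *:%R ^~ h).
have gE : forall s, g s = x + s *: h by [].
pose p := F \o g.
pose q : R -> R := (a \*: id) + (k \*: (id ^+ 2)).
have dq : forall s : R, is_derive s 1 q (a + k * (2 * s)).
  move=> s; apply: is_derive_eq.
  by rewrite expr1 /GRing.scale /= !mulr1.
have dg : forall s : R, is_diff s g (0 + ( *:%R ^~ h)) by move=> s; exact: is_diffD.
have dp : forall s : R, is_derive s 1 p (dotv (G (g s)) h).
  move=> s.
  have dgs : differentiable g s by [].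
  have dFs : differentiable F (g s) by case: (hgrad (g s)).
  have dps : differentiable p s by exact: differentiable_comp.
  apply: DeriveDef; first by apply/derivable1_diffP.
  rewrite deriveE // /p diff_comp //= diff_val /=.
  case: (hgrad (g s)) => _ ->.
  by rewrite add0r scale1r.
pose phi := p - q.
have dphi : forall s : R, is_derive s 1 phi (dotv (G (g s)) h - (a + k * (2 * s))).
  by move=> s; exact: is_deriveB.
have key : phi 1 <= phi 0.
  apply: (@ler0_derive1_nincr _ phi 0 1) => //.
  - move=> s; rewrite in_itv /= => /andP[s0 s1].
    rewrite derive1E derive_val gE.
    have -> : dotv (G (x + s *: h)) h - (a + k * (2 * s)) =
        dotv (G (x + s *: h) - G x) h - s * (L * enorm h ^+ 2).
      by rewrite dotvBl -/a /k; field.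
    rewrite subr_le0; apply: (le_trans (cauchy_schwarz _ _)).
    have H := hsmooth x (x + s *: h).
    have E1 : enorm (G x - G (x + s *: h)) = enorm (G (x + s *: h) - G x).
      by rewrite -enormN opprB.
    have E2 : enorm (x - (x + s *: h)) = s * enorm h.
      by rewrite opprD addNKr enormN enormZ ger0_norm // ltW.
    rewrite E1 E2 in H.
    have := ler_wpM2r (enorm_ge0 h) H.
    rewrite -/L => H2; apply: (le_trans H2); rewrite le_eqVlt; apply/orP; left; apply/eqP; rewrite expr2; ring.
  - apply: derivable_within_continuous => s _; by case: (dphi s).
have E1 : phi 1 = F (g 1) - (a * 1 + k * (1 * 1)) by [].
have E0 : phi 0 = F (g 0) - (a * 0 + k * (0 * 0)) by [].
move: key; rewrite E1 E0 !gE scale0r scale1r addr0 !mulr0 !mulr1 !addr0 subr0 /k.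
lra.
Qed.
End H.

Theorem lemma3p8 (R : realType) (d : nat)
  (F : 'rV[R]_d -> R) (gradF : 'rV[R]_d -> 'rV[R]_d) (K0 K1 gamma : R)
  (m w : nat -> 'rV[R]_d)
  (hgrad : is_gradient F gradF)
  (hcont : continuous gradF)
  (hsmooth : forall x y : 'rV[R]_d,
     enorm (gradF x - gradF y) <= (K0 + K1 * enorm (gradF x)) * enorm (x - y))
  (hgamma : 0 < gamma)
  (hm : forall t, m t.+1 != 0)
  (hw : forall t, w t.+1 = w t - (gamma / enorm (m t.+1)) *: m t.+1) :
  let delta := fun t => m t.+1 - gradF (w t) in
  (forall t : nat,
     F (w t.+1) - F (w t) <=
       - (gamma - 2^-1 * K1 * gamma ^+ 2) * enorm (gradF (w t))
       + 2^-1 * K0 * gamma ^+ 2 + 2 * gamma * enorm (delta t))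
  /\
  (forall T : nat, (1 <= T)%N ->
     (1 - 2^-1 * K1 * gamma) * (\sum_(0 <= t < T) enorm (gradF (w t))) <=
       (F (w 0%N) - F (w T)) / gamma + 2^-1 * K0 * T%:R * gamma
       + 2 * \sum_(0 <= t < T) enorm (delta t)).
Proof.
move=> delta.
have step : forall t : nat,
     F (w t.+1) - F (w t) <=
       - (gamma - 2^-1 * K1 * gamma ^+ 2) * enorm (gradF (w t))
       + 2^-1 * K0 * gamma ^+ 2 + 2 * gamma * enorm (delta t).
  move=> t.
  set mm := m t.+1; set g := gradF (w t); set n := enorm mm.
  have n0 : 0 < n.
    rewrite lt_def enorm_ge0 andbT; apply/eqP => /enorm_eq0 h0.
    by move: (hm t); rewrite -/mm h0 eqxx.
  set c := gamma / n.
  have c0 : 0 < c by rewrite divr_gt0.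
  have gc : gamma = c * n by rewrite /c divfK // gt_eqF.
  have hD := descent hgrad hsmooth (w t) (- (c *: mm)).
  rewrite -/g -hw -/delta in hD.
  have Eh : enorm (- (c *: mm)) = gamma by rewrite enormN enormZ gtr0_norm // -gc.
  rewrite Eh in hD.
  set nd := enorm (delta t).
  have Ed : g = mm - delta t by rewrite /delta opprB addrC subrK.
  have hgm : dotv g mm >= n ^+ 2 - nd * n.
    rewrite {1}Ed dotvBl enorm_sq lerD2l lerN2.
    by rewrite dotvC; apply: (le_trans (cauchy_schwarz _ _)); rewrite -/nd mulrC.
  have hng : enorm g <= n + nd.
    by rewrite Ed; apply: (le_trans (enorm_triangle _ _)); rewrite enormN.
  have hdot : dotv g (- (c *: mm)) <= - gamma * enorm g + 2 * gamma * nd.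
    rewrite -scaleNr dotvZr.
    have := ler_wpM2l (ltW c0) hgm.
    rewrite gc; set eg := enorm g.
    have := ler_wpM2l (ltW (mulr_gt0 c0 n0)) hng.
    move: (enorm_ge0 g) (enorm_ge0 (delta t)); rewrite -/eg -/nd => ? ? H1 H2.
    nra.
  set eg := enorm g in hD hdot *.
  have -> : - (gamma - 2^-1 * K1 * gamma ^+ 2) * eg + 2^-1 * K0 * gamma ^+ 2
      + 2 * gamma * nd = (- gamma * eg + 2 * gamma * nd)
      + 2^-1 * (K0 + K1 * eg) * gamma ^+ 2 by ring.
  lra.
split; first exact: step.
move=> T _.
set A := gamma - 2^-1 * K1 * gamma ^+ 2.
have hsum : \sum_(0 <= t < T) (F (w t.+1) - F (w t)) <=
   \sum_(0 <= t < T) (- A * enorm (gradF (w t)) + 2^-1 * K0 * gamma ^+ 2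
        + 2 * gamma * enorm (delta t)).
  by apply: ler_sum => t _; exact: step.
rewrite telescope_sumr // !big_split /= -!mulr_sumr sumr_const_nat subn0 in hsum.
rewrite -mulr_natr in hsum.
set S := \sum_(0 <= t < T) enorm (gradF (w t)) in hsum *.
set Sd := \sum_(0 <= t < T) enorm (delta t) in hsum *.
rewrite -(ler_pM2l hgamma).
have -> : gamma * ((1 - 2^-1 * K1 * gamma) * S) = A * S by rewrite /A; ring.
have -> : gamma * ((F (w 0%N) - F (w T)) / gamma + 2^-1 * K0 * T%:R * gamma + 2 * Sd)
   = (F (w 0%N) - F (w T)) + 2^-1 * K0 * gamma ^+ 2 * T%:R + 2 * gamma * Sd.
  by field; rewrite gt_eqF.
lra.
Qed.
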